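(* Let $R$ be the ring of integers of a finite extension of $\mathbb Q_p$, let $\nu\in\Lambda^{\mathrm{dig}}_{R,1}$, and let $f_\nu(T)\in R[[T]]$ be the Amice transform of $d_{\infty,1}(\nu)$. Then: (1) $\nu(\mathbf 1)$ is a unit of $R$ if and only if $\mu(f_\nu)=\lambda(f_\nu)=0$; (2) $\nu(\mathbf 1)$ is not a unit of $R$ and $D\nu$ is a unit of $R$ if and only if $\mu(f_\nu)=0$ and $\lambda(f_\nu)=1$.
   Context: $\Lambda^{\mathrm{dig}}_{R,1}=\varprojlim_nR[(\mathbb Z/p)^n]$ is the algebra of $R$-valued measures on $(\mathbb Z/p)^{\mathbb N}$. The digit map $d_{\infty,1}:(\mathbb Z/p)^{\mathbb N}\to\mathbb Z_p$, $(a_i)\mapsto\sum_{i\ge1}\tilde a_ip^{i-1}$ ($\tilde a_i\in\{0,\ldots,p-1\}$), induces by pushforward an $R$-module isomorphism $\Lambda^{\mathrm{dig}}_{R,1}\to R[[\mathbb Z_p]]$. The Amice transform sends $\mu\in R[[\mathbb Z_p]]$ to $\sum_{k\ge0}\mu(\binom{x}{k})T^k$. $\nu(\mathbf 1)$ is the total mass of $\nu$; $D\nu=\sum_{a=1}^{p}a\,\nu(\mathbf 1_{\pi_1^{-1}\{a\}})$ where $\pi_1$ is projection to the first factor $\mathbb Z/p$. Weierstrass invariants: with $\pi$ a uniformizer of $R$, a nonzero $f\in R[[T]]$ factors uniquely as $\pi^{\mu(f)}g(T)u(T)$ with $u\in R[[T]]^\times$ and $g$ monic of degree $\lambda(f)$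 with non-leading coefficients in $(\pi)$; for $f=0$, $\mu(f)=\infty$, $\lambda(f)=0$. *)

(* Defs.v *)
From HB Require Import structures.
From mathcomp Require Import all_boot all_order all_algebra.
Set Implicit Arguments. Unset Strict Implicit. Unset Printing Implicit Defensive.
Import Order.TTheory GRing.Theory Num.Theory.
Local Open Scope ring_scope.

Definition dvdr (R : comNzRingType) (a b : R) : Prop := exists c, b = a * c.

Definition pi_lim (R : comNzRingType) (pi : R) (s : nat -> R) (l : R) : Prop :=
  forall m : nat, exists N : nat, forall n : nat, (N <= n)%N -> dvdr (pi ^+ m) (s n - l).

(* [padic_int_ring p pi] : R is the ring of integers of a finite extension of
   Q_p and pi is a uniformizer of R.  Concretely: R is a discrete valuation ring
   with uniformizer pi, of characteristic 0, complete for the pi-adic topology,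
   with finite residue field R/(pi) of characteristic p.  (By the Cohen structure
   theorem these are exactly the rings of integers of finite extensions of Q_p.) *)
Definition padic_int_ring (p : nat) (R : idomainType) (pi : R) : Prop :=
  [/\ pi != 0, pi \isn't a GRing.unit &
      (forall x : R, x != 0 -> exists (v : nat) (u : R), u \is a GRing.unit /\ x = pi ^+ v * u)] /\
    [/\ (forall n : nat, (n%:R : R) = 0 -> n = 0%N),
      dvdr pi p%:R,
      (exists s : seq R, forall x : R, exists2 r, r \in s & dvdr pi (x - r))
    & (forall s : nat -> R,
         (forall m : nat, exists N : nat, forall n : nat, (N <= n)%N -> dvdr (pi ^+ m) (s n - s N)) ->
         exists l : R, pi_lim pi s l)].

(* An element of R[(Z/p)^n] is a function (Z/p)^n -> R (coefficient of each group
   element); the family is compatible with the projections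
   (Z/p)^{n+1} -> (Z/p)^n forgetting the last coordinate. *)
Definition dig_measure (p : nat) (R : comNzRingType) (nu : forall n : nat, n.-tuple 'I_p -> R) : Prop :=
  forall (n : nat) (a : n.-tuple 'I_p), nu n a = \sum_(b : 'I_p) nu n.+1 (rcons_tuple a b).

Definition total_mass (p : nat) (R : comNzRingType) (nu : forall n : nat, n.-tuple 'I_p -> R) : R :=
  nu 0%N [tuple].

(* D nu = sum_{a=1}^{p} a * nu(1_{pi_1^{-1}{a}}), classes of Z/p represented by 1..p *)
Definition Dop (p : nat) (R : comNzRingType) (nu : forall n : nat, n.-tuple 'I_p -> R) : R :=
  \sum_(b : 'I_p) (if nat_of_ord b == 0%N then p else nat_of_ord b)%:R * nu 1%N [tuple b].

Definition digit_val (p n : nat) (a : n.-tuple 'I_p) : nat :=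
  \sum_(i < n) nat_of_ord (tnth a i) * p ^ i.

(* pushforward d_{infty,1}(nu) : its value on the ball c + p^n Z_p (0 <= c < p^n) *)
Definition dig_push (p : nat) (R : comNzRingType) (nu : forall n : nat, n.-tuple 'I_p -> R)
  (n c : nat) : R :=
  \sum_(a : n.-tuple 'I_p | digit_val a == c) nu n a.

(* Riemann sums for mu(binom(x,k)), mu a measure on Z_p given on balls *)
Definition binom_riemann (p : nat) (R : comNzRingType) (mu : nat -> nat -> R) (k n : nat) : R :=
  \sum_(c < p ^ n) mu n c * ('C(c, k))%:R.

(* f is the Amice transform of d_{infty,1}(nu):
   f_k = d_{infty,1}(nu)(binom(x,k)) (pi-adic limit of Riemann sums) *)
Definition amice_dig (p : nat) (R : comNzRingType) (pi : R)
  (nu : forall n : nat, n.-tuple 'I_p -> R) (f : nat -> R) : Prop :=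
  forall k : nat, pi_lim pi (binom_riemann p (dig_push nu) k) (f k).

Definition ps_mul (R : comNzRingType) (f g : nat -> R) (n : nat) : R :=
  \sum_(i < n.+1) f i * g (n - i)%N.

Definition ps_one (R : comNzRingType) (n : nat) : R := (n == 0%N)%:R.

Definition ps_unit (R : comNzRingType) (u : nat -> R) : Prop :=
  exists v : nat -> R, forall n, ps_mul u v n = ps_one R n.

Definition distinguished (R : comNzRingType) (pi : R) (g : nat -> R) (lam : nat) : Prop :=
  [/\ g lam = 1, (forall i, (lam < i)%N -> g i = 0) & (forall i, (i < lam)%N -> dvdr pi (g i))].

(* Weierstrass invariants: mu = Some m (m finite) or None (= infinity) *)
Definition weierstrass_invariants (R : comNzRingType) (pi : R) (f : nat -> R)
  (mu : option nat) (lam : nat) : Prop :=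
  ((forall n, f n = 0) /\ mu = None /\ lam = 0%N) \/
  ((exists n, f n != 0) /\ exists m : nat, mu = Some m /\
     exists (g u : nat -> R), [/\ distinguished pi g lam, ps_unit u &
                                 forall n, f n = pi ^+ m * ps_mul g u n]).

(* Main.v *)
Require Import Defs.
From HB Require Import structures.
From mathcomp Require Import all_boot all_order all_algebra.
From mathcomp Require Import zify ring.
Import Order.TTheory GRing.Theory Num.Theory.
Set Implicit Arguments. Unset Strict Implicit.
Local Open Scope ring_scope.

Lemma big_rcons_tuple (R : comNzRingType) (T : finType) (m : nat)
  (F : m.+1.-tuple T -> R) :
  \sum_(a : m.+1.-tuple T) F a = \sum_(a : m.-tuple T) \sum_(b : T) F (rcons_tuple a b).
Proof.
rewrite pair_big /=.
rewrite (reindex (fun ab : m.-tuple T * T => rcons_tuple ab.1 ab.2)) //=.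
exists (fun t : m.+1.-tuple T => ([tuple of belast (thead t) (behead t)], last (thead t) (behead t))).
- move=> [a b] _ /=.
  have -> : [tuple of belast (thead (rcons_tuple a b)) (behead (rcons_tuple a b))] = a.
    apply: val_inj => /=.
    case: a => [[|x s] Ha] //=.
    by rewrite belast_rcons.
  congr pair.
  case: a => [[|x s] Ha] //=.
  by rewrite last_rcons.
- move=> t _; apply: val_inj => /=.
  rewrite -lastI.
  by case: t => [[|x s] Hs].
Qed.

Lemma big_tuple0 (R : comNzRingType) (T : finType) (F : 0.-tuple T -> R) :
  \sum_(a : 0.-tuple T) F a = F [tuple].
Proof. by rewrite (big_pred1 [tuple]) // => t; apply/esym/eqP/tuple0. Qed.

Lemma digit_lt (p n : nat) (f : 'I_n -> nat) : (forall i, f i < p)%N ->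
  (\sum_(i < n) f i * p ^ i < p ^ n)%N.
Proof.
elim: n f => [|n IH] f hf; first by rewrite big_ord0 expn0.
rewrite big_ord_recr /= expnS.
have h1 := IH (fun i => f (widen_ord (leqnSn n) i)) (fun i => hf _).
have h2 := hf ord_max.
move: h1 h2; set S := (\sum_(i < n) _)%N; set x := (p ^ n)%N; set y := f ord_max.
move=> h1 h2; nia.
Qed.

Unset Implicit Arguments.
Section Meas.
Variables (p : nat) (R : idomainType) (nu : forall n : nat, n.-tuple 'I_p -> R).
Hypothesis hnu : dig_measure nu.

Lemma mass n : \sum_(a : n.-tuple 'I_p) nu n a = nu 0 [tuple].
Proof.
elim: n => [|n IH]; first by rewrite big_tuple0.
rewrite big_rcons_tuple -IH; apply: eq_bigr => a _; by rewrite hnu.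
Qed.

Lemma first n : \sum_(a : n.+1.-tuple 'I_p) nu n.+1 a * (tnth a ord0 : nat)%:R
  = \sum_(b : 'I_p) nu 1 [tuple b] * (b : nat)%:R.
Proof.
elim: n => [|n IH].
  rewrite big_rcons_tuple big_tuple0; apply: eq_bigr => b _.
  by congr (_ * _); congr (nu 1); apply: val_inj.
rewrite big_rcons_tuple -IH; apply: eq_bigr => a _.
rewrite hnu big_distrl; apply: eq_bigr => b _.
congr (_ * _); congr ((nat_of_ord _)%:R).
by rewrite (tnth_nth (tnth a ord0)) /= nth_rcons size_tuple /= [RHS](tnth_nth (tnth a ord0)).
Qed.

Lemma riem k n : binom_riemann p (dig_push nu) k n =
  \sum_(a : n.-tuple 'I_p) nu n a * ('C(digit_val a, k))%:R.
Proof.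
rewrite /binom_riemann /dig_push.
under eq_bigr do rewrite big_distrl.
rewrite (exchange_big_dep xpredT) //=.
apply: eq_bigr => a _.
have lt : (digit_val a < p ^ n)%N by apply: digit_lt => i; exact: ltn_ord.
rewrite (big_pred1 (Ordinal lt)) //=.
Qed.

Lemma riem_head n (a : n.+1.-tuple 'I_p) : digit_val a =
  (tnth a ord0 + p * \sum_(i < n) tnth a (lift ord0 i) * p ^ i)%N.
Proof.
rewrite /digit_val big_ord_recl expn0 muln1; congr addn.
rewrite big_distrr; apply: eq_bigr => i _ /=; by rewrite expnS mulnCA.
Qed.

Lemma riem0 n : binom_riemann p (dig_push nu) 0 n = total_mass nu.
Proof.
by rewrite riem; under eq_bigr do rewrite bin0 mulr1; rewrite mass.
Qed.

Lemma riem1 n : exists X, binom_riemann p (dig_push nu) 1 n.+1 =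
  \sum_(b : 'I_p) nu 1 [tuple b] * (b : nat)%:R + p%:R * X.
Proof.
exists (\sum_(a : n.+1.-tuple 'I_p) nu n.+1 a * ((\sum_(i < n) tnth a (lift ord0 i) * p ^ i)%N)%:R).
rewrite riem; under eq_bigr do rewrite bin1 riem_head natrD natrM mulrDr.
rewrite big_split /= first; congr (_ + _).
rewrite big_distrr; apply: eq_bigr => a _ /=; by rewrite mulrCA.
Qed.

Lemma dop_eq : exists Y, Dop nu = \sum_(b : 'I_p) nu 1 [tuple b] * (b : nat)%:R + p%:R * Y.
Proof.
exists (\sum_(b : 'I_p) if (b : nat) == 0%N then nu 1 [tuple b] else 0).
apply/eqP; rewrite addrC -subr_eq /Dop -sumrB big_distrr; apply/eqP; apply: eq_bigr => b _ /=.
case: eqP => [->|_]; first by rewrite mulr0n mulr0 subr0 mulrC.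
by rewrite mulrC subrr mulr0.
Qed.
End Meas.
Set Implicit Arguments.
Section S.
Variables (R : idomainType) (pi : R).

Lemma dv_add a b : dvdr pi a -> dvdr pi b -> dvdr pi (a + b).
Proof. by move=> [c ->] [d ->]; exists (c + d); rewrite mulrDr. Qed.
Lemma dv_opp a : dvdr pi a -> dvdr pi (- a).
Proof. by move=> [c ->]; exists (- c); rewrite mulrN. Qed.
Lemma dv_sub a b : dvdr pi a -> dvdr pi b -> dvdr pi (a - b).
Proof. by move=> ha hb; apply: dv_add => //; apply: dv_opp. Qed.
Lemma dv_mulr a b : dvdr pi a -> dvdr pi (a * b).
Proof. by move=> [c ->]; exists (c * b); rewrite mulrA. Qed.
Lemma dv_mull a b : dvdr pi b -> dvdr pi (a * b).
Proof. by move=> hb; rewrite mulrC; apply: dv_mulr. Qed.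
Lemma dv_pi : dvdr pi pi.
Proof. by exists 1; rewrite mulr1. Qed.
Lemma dv_0 : dvdr pi 0.
Proof. by exists 0; rewrite mulr0. Qed.

Hypothesis pinu : pi \isn't a GRing.unit.
Hypothesis fact : forall x : R, x != 0 -> exists (v : nat) (u : R), u \is a GRing.unit /\ x = pi ^+ v * u.

Lemma unit_ndv x : x \is a GRing.unit <-> ~ dvdr pi x.
Proof.
split.
  move=> ux [c hc]; move: ux; rewrite hc unitrM => /andP[hp _].
  by move: pinu; rewrite hp.
move=> hn; have [x0|x0] := eqVneq x 0; first by case: hn; rewrite x0; exact: dv_0.
have [[|v] [u [hu hx]]] := fact x0; first by rewrite hx expr0 mul1r.
by case: hn; rewrite hx exprS -mulrA; apply: dv_mulr; exact: dv_pi.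
Qed.

Lemma unit_cong x y : dvdr pi (x - y) -> (x \is a GRing.unit <-> y \is a GRing.unit).
Proof.
move=> h; split=> hx; apply/unit_ndv => hd; move/unit_ndv: hx; apply.
  by have := dv_add h hd; rewrite subrK.
by have := dv_sub hd h; rewrite opprB addrC subrK.
Qed.
End S.
Unset Implicit Arguments.

Section W.
Variables (R : idomainType) (pi : R).
Hypothesis pinu : pi \isn't a GRing.unit.
Hypothesis fact : forall x : R, x != 0 -> exists (v : nat) (u : R), u \is a GRing.unit /\ x = pi ^+ v * u.

Lemma dv_exp m x : (0 < m)%N -> dvdr pi (pi ^+ m * x).
Proof.
by case: m => // m _; rewrite exprS -mulrA; apply: dv_mulr; exact: dv_pi.
Qed.

Lemma nunit x : dvdr pi x -> x \isn't a GRing.unit.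
Proof. by move=> h; apply/negP => /(unit_ndv pinu fact). Qed.

Lemma weier (f : nat -> R) mu lam (hW : weierstrass_invariants pi f mu lam) :
  (f 0%N \is a GRing.unit <-> mu = Some 0%N /\ lam = 0%N) /\
  ((f 0%N \isn't a GRing.unit /\ f 1%N \is a GRing.unit) <-> mu = Some 0%N /\ lam = 1%N).
Proof.
have U := unit_ndv pinu fact.
case: hW => [[hz [-> _]] | [_ [m [-> [g [u [[g1 g2 g3] [v hv] hf]]]]]]].
  have n0 : forall n, f n \isn't a GRing.unit by move=> n; apply: nunit; rewrite hz; exact: dv_0.
  split; split; [|by case| |by case].
    by move=> h; move: (n0 0%N); rewrite h.
  by move=> [_ h]; move: (n0 1%N); rewrite h.
have u0 : u 0%N \is a GRing.unit.
  have := hv 0%N; rewrite /ps_mul big_ord1 /ps_one /= => h.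
  have : u 0%N * v 0%N \is a GRing.unit by rewrite h unitr1.
  by rewrite unitrM => /andP[].
have f0 : f 0%N = pi ^+ m * (g 0%N * u 0%N) by rewrite hf /ps_mul big_ord1.
have f1 : f 1%N = pi ^+ m * (g 0%N * u 1%N + g 1%N * u 0%N)
  by rewrite hf /ps_mul big_ord_recl big_ord1.
split; split.
- move=> /U hn; case: m hf f0 f1 => [|m] hf f0 f1; last first.
    by case: hn; rewrite f0; apply: dv_exp.
  case: lam g1 g2 g3 => [|l] g1 g2 g3 //.
  by case: hn; rewrite f0 expr0 mul1r; apply: dv_mulr; apply: g3.
- move=> [[hm] hl]; subst m lam; move: f0; rewrite g1 expr0 !mul1r => ->; exact: u0.
- move=> [hn /U h1]; case: m hf f0 f1 => [|m] hf f0 f1; last first.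
    by case: h1; rewrite f1; apply: dv_exp.
  case: lam g1 g2 g3 => [|[|l]] g1 g2 g3 //.
    by move: hn; rewrite f0 g1 expr0 !mul1r u0.
  case: h1; rewrite f1 expr0 mul1r; apply: dv_add; apply: dv_mulr; exact: g3.
- move=> [[hm] hl]; subst m lam; rewrite f0 f1 g1 expr0 !mul1r; split.
    by apply: nunit; apply: dv_mulr; apply: g3.
  apply/U => hd; move/U: u0; apply.
  have := dv_sub hd (dv_mulr (u 1%N) (g3 0%N isT)).
  by rewrite addrC addKr.
Qed.
End W.

Theorem corollary4p2 (p : nat) (R : idomainType) (pi : R)
  (hp : prime p) (hR : padic_int_ring p pi)
  (nu : forall n : nat, n.-tuple 'I_p -> R) (hnu : dig_measure nu)
  (f : nat -> R) (hf : amice_dig pi nu f)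
  (mu : option nat) (lam : nat) (hW : weierstrass_invariants pi f mu lam) :
  (total_mass nu \is a GRing.unit <-> mu = Some 0%N /\ lam = 0%N) /\
  ((total_mass nu \isn't a GRing.unit /\ Dop nu \is a GRing.unit)
     <-> mu = Some 0%N /\ lam = 1%N).
Proof.
case: hR => [[pi0 pinu fact] [_ dvp _ _]].
have h0 : dvdr pi (total_mass nu - f 0%N).
  have [N hN] := hf 0%N 1%N.
  by have := hN N (leqnn N); rewrite riem0 // expr1.
have h1 : dvdr pi (Dop nu - f 1%N).
  have [N hN] := hf 1%N 1%N.
  have := hN N.+1 (leqnSn N); rewrite expr1.
  have [X hX] := riem1 _ _ _ hnu N; have [Y hY] := dop_eq _ _ nu.
  rewrite hX => hd.
  set S := \sum_(b : 'I_p) _ in hX hY hd.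
  have -> : Dop nu - f 1%N = (S + p%:R * X - f 1%N) - p%:R * (X - Y) by rewrite hY; ring.
  by apply: dv_sub => //; apply: dv_mulr.
have e0 := unit_cong pinu fact h0.
have e1 := unit_cong pinu fact h1.
have e0' : total_mass nu \isn't a GRing.unit <-> f 0%N \isn't a GRing.unit.
  by split=> /negP H; apply/negP => H'; apply: H; apply/e0.
have [w1 w2] := weier _ _ pinu fact _ _ _ hW.
tauto.
Qed.
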